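(* Let $d,n\ge2$ and let $w\in G(d,d,n)$ be a parabolic Coxeter element. If $w$ consists of a single simultaneous cycle of length $k$ (all other colored integers fixed), then the interval $[\varepsilon,w]$ in $(G(d,d,n),\le_T)$ is isomorphic to $\mathcal{NC}_{G(1,1,k)}$.
   Context: $G(d,d,n)$ is the group of $n\times n$ monomial matrices with $d$-th roots of unity as nonzero entries whose product is $1$, viewed as permutations of colored integers $k^{(s)}$ ($=\zeta^se_k$, $\zeta=e^{2\pi i/d}$, $k\in[n]$, $s\in\mathbb{Z}/d$). The simultaneous cycle $((k_1^{(t_1)}\;\ldots\;k_r^{(t_r)}))$ is the product over $c\in\mathbb{Z}/d$ of the cycles $(k_1^{(t_1+c)}\ldots k_r^{(t_r+c)})$; its length is $r$. $T$ is the set of reflections, $\ell_T$ the absolute length (minimal number of reflection factors), $u\le_Tv$ iff $\ell_T(v)=\ell_T(u)+\ell_T(u^{-1}v)$. A parabolic Coxeter element is an element $w$ with $w\le_T\gamma'$ for some Coxeter element $\gamma'$ (equivalently a Coxeter element of a parabolic subgroup). $\mathcal{NC}_{G(1,1,k)}$ is the noncrossing partition lattice of $G(1,1,k)\cong\mathfrak{S}_k$, i.e. the interval $[\varepsilon,(1\,2\,\ldots\,k)]$ in $\mathfrak{S}_k$ under absolute order (isomorphic to Kreweras' lattice of noncrossing partitions of $[k]$). *)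

(* Defs.v *)
From HB Require Import structures.
From mathcomp Require Import all_boot all_order all_algebra all_fingroup all_field.
Set Implicit Arguments. Unset Strict Implicit. Unset Printing Implicit Defensive.
Import Order.TTheory GRing.Theory Num.Theory.
Local Open Scope ring_scope.

Section AbsOrder.
Variables (A : Type) (mul : A -> A -> A) (one : A) (inv : A -> A) (T : A -> Prop).

Definition factor_len (g : A) (m : nat) : Prop :=
  exists s : seq A, size s = m /\ (forall i, (i < size s)%N -> T (nth one s i)) /\ foldr mul one s = g.

Definition is_abs_len (g : A) (m : nat) : Prop :=
  factor_len g m /\ forall m', factor_len g m' -> (m <= m')%N.

Definition abs_le (u v : A) : Prop :=
  exists a b c, [/\ is_abs_len v a, is_abs_len u b, is_abs_len (mul (inv u) v) c
                 & a = (b + c)%N].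
End AbsOrder.

Definition poset_iso (A B : Type) (X : A -> Prop) (leX : A -> A -> Prop)
  (Y : B -> Prop) (leY : B -> B -> Prop) : Prop :=
  exists (f : A -> B) (g : B -> A),
    [/\ forall u, X u -> Y (f u),
        forall x, Y x -> X (g x),
        forall u, X u -> g (f u) = u,
        forall x, Y x -> f (g x) = x
      & forall u v, X u -> X v -> (leX u v <-> leY (f u) (f v))].

(* zeta m = e^{2 pi i / m}  (m.-root (-1) = e^{i pi / m}, minimal argument) *)
Definition zeta (m : nat) : algC := (m.-root (-1)) ^+ 2.

Definition in_Gddn (d n : nat) (M : 'M[algC]_n) : Prop :=
  exists s : 'S_n,
    [/\ forall i j, M i j != 0 <-> i = s j,
        forall j, (M (s j) j) ^+ d = 1
      & \prod_j M (s j) j = 1].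

Definition reflG (d n : nat) (M : 'M[algC]_n) : Prop :=
  in_Gddn d M /\ \rank (M - 1%:M)%R = 1%N.

Definition leG (d n : nat) : 'M[algC]_n -> 'M[algC]_n -> Prop :=
  abs_le (@mulmx algC n n n) 1%:M (@invmx algC n) (@reflG d n).

(* Coxeter elements: e^{2 pi i/h}-regular elements, h = d(n-1) the Coxeter number *)
Definition coxeterG (d n : nat) (g : 'M[algC]_n) : Prop :=
  in_Gddn d g /\
  exists v : 'cV[algC]_n,
    g *m v = zeta (d * n.-1) *: v /\ forall t, reflG d t -> t *m v != v.

Definition parabolic_coxeterG (d n : nat) (w : 'M[algC]_n) : Prop :=
  in_Gddn d w /\ exists g, coxeterG d g /\ leG d w g.

Definition intervalG (d n : nat) (w : 'M[algC]_n) (u : 'M[algC]_n) : Prop :=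
  in_Gddn d u /\ leG d 1%:M u /\ leG d u w.

(* the simultaneous cycle ((ks_0^{(ts_0)} ... ks_{k-1}^{(ts_{k-1})})), other colored
   integers fixed; columns = images of basis vectors, colored integer j^{(s)} = zeta^s e_j *)
Definition sim_cycle (d n : nat) (ks : seq 'I_n) (ts : seq int) : 'M[algC]_n :=
  \matrix_(i, j)
    if j \in ks then
      let m := index j ks in
      let m' := (m.+1 %% size ks)%N in
      (if i == nth j ks m' then zeta d ^ (nth 0%Z ts m' - nth 0%Z ts m) else 0)
    else (i == j)%:R.

(* ---------- NC_{G(1,1,k)} : the interval [eps, (1 2 ... k)] in S_k ---------- *)
Definition long_cycle (k : nat) : 'S_k := perm (@ordS_inj k).

Definition transpositionS (k : nat) (t : 'S_k) : Prop :=
  exists i j : 'I_k, i != j /\ t = tperm i j.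

Definition leS (k : nat) : 'S_k -> 'S_k -> Prop :=
  abs_le (fun a b => (a * b)%g) 1%g (fun a => (a^-1)%g) (@transpositionS k).

Definition NC_interval (k : nat) (u : 'S_k) : Prop :=
  leS 1%g u /\ leS u (long_cycle k).

(* Main.v *)
Require Import Defs.
From mathcomp Require Import all_boot all_order all_algebra all_fingroup all_field.
From mathcomp Require Import ring zify.
Set Implicit Arguments. Unset Strict Implicit. Unset Printing Implicit Defensive.
Import Order.TTheory GRing.Theory Num.Theory.

Section Lift.
Variables (n : nat) (ks : seq 'I_n).
Hypothesis uks : uniq ks.
Local Notation k := (size ks).

Definition kk (m : 'I_k) : 'I_n := tnth (in_tuple ks) m.

Lemma kk_in m : kk m \in ks.
Proof. exact: (mem_tnth m (in_tuple ks)). Qed.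

Lemma index_kk m : index (kk m) ks = m.
Proof. by rewrite /kk (tnth_nth (kk m)) index_uniq. Qed.

Lemma kk_inj : injective kk.
Proof. by move=> a b e; apply: val_inj; rewrite /= -index_kk e index_kk. Qed.

Lemma kk_onto j : j \in ks -> exists m, j = kk m.
Proof.
move=> jin; have lt : (index j ks < k)%N by rewrite index_mem.
exists (Ordinal lt); apply/eqP.
by rewrite /kk (tnth_nth j) /= nth_index.
Qed.

Definition liftf (p : 'S_k) (j : 'I_n) : 'I_n :=
  if insub (index j ks) is Some m then kk (p m) else j.

Lemma liftf_kk p m : liftf p (kk m) = kk (p m).
Proof.
rewrite /liftf index_kk.
have -> : insub (nat_of_ord m) = Some m by rewrite valK.
by [].
Qed.

Lemma liftf_out p j : j \notin ks -> liftf p j = j.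
Proof.
move=> jn; rewrite /liftf insubF //.
by rewrite index_mem (negbTE jn).
Qed.

Lemma liftf_inj p : injective (liftf p).
Proof.
move=> a b.
case: (boolP (a \in ks)) => [ain|aout]; case: (boolP (b \in ks)) => [bin|bout].
- case: (kk_onto ain) => ma ->; case: (kk_onto bin) => mb ->.
  by rewrite !liftf_kk => /kk_inj /perm_inj ->.
- case: (kk_onto ain) => ma ->; rewrite liftf_kk liftf_out // => e.
  by move: bout; rewrite -e kk_in.
- case: (kk_onto bin) => mb ->; rewrite liftf_kk liftf_out // => e.
  by move: aout; rewrite e kk_in.
- by rewrite !liftf_out.
Qed.

Definition liftp (p : 'S_k) : 'S_n := perm (@liftf_inj p).

Lemma liftp_kk p m : liftp p (kk m) = kk (p m).
Proof. by rewrite permE liftf_kk. Qed.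

Lemma liftp_out p j : j \notin ks -> liftp p j = j.
Proof. by move=> h; rewrite permE liftf_out. Qed.

Lemma liftp_cases (P : 'I_n -> Prop) :
  (forall m, P (kk m)) -> (forall j, j \notin ks -> P j) -> forall j, P j.
Proof.
move=> h1 h2 j; case: (boolP (j \in ks)) => [jin|]; last exact: h2.
by case: (kk_onto jin) => m ->.
Qed.

Lemma liftpM p q : liftp (p * q) = (liftp p * liftp q)%g.
Proof.
apply/permP; apply: liftp_cases => [m|j jn].
  by rewrite permM !liftp_kk permM.
by rewrite permM !liftp_out.
Qed.

Lemma liftp1 : liftp 1 = 1%g.
Proof.
apply/permP; apply: liftp_cases => [m|j jn].
  by rewrite liftp_kk !perm1.
by rewrite liftp_out // perm1.
Qed.

Lemma liftpV p : liftp p^-1 = (liftp p)^-1%g.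
Proof.
apply/esym/eqP; by rewrite eq_invg_mul -liftpM mulgV liftp1.
Qed.

Lemma liftp_tperm i j : liftp (tperm i j) = tperm (kk i) (kk j).
Proof.
apply/permP; apply: liftp_cases => [m|x xn].
  rewrite liftp_kk; case: (tpermP i j m) => [->|->|/eqP ni /eqP nj].
  - by rewrite tpermL.
  - by rewrite tpermR.
  rewrite tpermD //; apply/eqP => /kk_inj; by [apply/eqP; rewrite eq_sym|].
rewrite liftp_out // tpermD //; apply/eqP => e; move: xn; by rewrite -e kk_in.
Qed.

Lemma liftp_inj : injective liftp.
Proof.
move=> p q e; apply/permP => m; apply: kk_inj.
by rewrite -!liftp_kk e.
Qed.

End Lift.

Local Open Scope ring_scope.

Section GenMx.
Variables (F : fieldType) (n : nat).
Implicit Types A B C : 'M[F]_n.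

Lemma invmx_eq A B : A *m B = 1%:M -> invmx A = B.
Proof.
move=> e; have [uA _] := mulmx1_unit e.
by rewrite -[invmx A]mulmx1 -e mulmxA mulVmx // mul1mx.
Qed.

Lemma rank_unitl A B : A \in unitmx -> \rank (A *m B) = \rank B.
Proof.
move=> uA; apply/eqP; rewrite eqn_leq mxrankM_maxr /=.
by rewrite -{1}(mulKmx uA B) mxrankM_maxr.
Qed.

Lemma rank_unitr A B : A \in unitmx -> \rank (B *m A) = \rank B.
Proof. by move=> uA; rewrite mxrankMfree // row_free_unit. Qed.

Lemma rank_conj A A' B : A *m A' = 1%:M -> \rank (A *m B *m A') = \rank B.
Proof.
move=> e; have [uA uA'] := mulmx1_unit e.
by rewrite rank_unitr // rank_unitl.
Qed.

Lemma rank_prod_sub1 A B :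
  (\rank (A *m B - 1%:M)%R <= \rank (A - 1%:M)%R + \rank (B - 1%:M)%R)%N.
Proof.
have -> : A *m B - 1%:M = (A - 1%:M) *m B + (B - 1%:M).
  by rewrite mulmxBl mul1mx addrA subrK.
apply: leq_trans (mxrank_add _ _) _.
by rewrite leq_add2r mxrankM_maxl.
Qed.

Lemma rank_inv_sub1 A : A \in unitmx -> \rank (invmx A - 1%:M)%R = \rank (A - 1%:M)%R.
Proof.
move=> uA.
have -> : invmx A - 1%:M = invmx A *m (- (A - 1%:M)).
  by rewrite mulmxN mulmxBr mulVmx // mulmx1 opprB.
by rewrite rank_unitl ?unitmx_inv // mxrank_opp.
Qed.

End GenMx.

Section PermMx.
Variables (F : fieldType) (N : nat).

Lemma mul_permE m (A : 'M[F]_(m, N)) (s : 'S_N) i j :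
  (A *m perm_mx s) i j = A i (s^-1%g j).
Proof. by rewrite -[s]invgK -col_permE mxE invgK. Qed.

Lemma rank_tperm (a b : 'I_N) : a != b ->
  \rank (perm_mx (tperm a b) - 1%:M : 'M[F]_N)%R = 1%N.
Proof.
move=> ab.
pose u : 'cV[F]_N := \col_x ((x == a)%:R - (x == b)%:R).
pose v : 'rV[F]_N := \row_y ((y == b)%:R - (y == a)%:R).
have -> : perm_mx (tperm a b) - 1%:M = u *m v.
  apply/matrixP => x y; rewrite !mxE big_ord1 !mxE.
  case: (tpermP a b x) => [->|->|/eqP xa /eqP xb].
  - rewrite eqxx. move: ab; rewrite !(eq_sym y). case: (a =P b) => // _ _.
    case: (b =P y); case: (a =P y) => _ _ /=; ring.
  - rewrite eqxx. move: ab; rewrite !(eq_sym y) eq_sym. case: (b =P a) => // _ _.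
    case: (b =P y); case: (a =P y) => _ _ /=; ring.
  - move: xa xb; case: (x =P a) => // _; case: (x =P b) => // _ _ _ /=; ring.
apply/eqP; rewrite eqn_leq (leq_trans (mxrankM_maxr _ _) (rank_leq_row _)) /=.
rewrite lt0n mxrank_eq0; apply/eqP => /matrixP /(_ a b).
rewrite !mxE big_ord1 !mxE eqxx.
move: ab; rewrite eq_sym; case: (b =P a) => // _ _ /=.
rewrite eqxx !subr0 mulr1; move/eqP; by rewrite oner_eq0.
Qed.

Lemma rank_step (s : 'S_N) (y : 'I_N) : s y != y ->
  (\rank (perm_mx (tperm y (s^-1%g y) * s) - 1%:M : 'M[F]_N)%R
     < \rank (perm_mx s - 1%:M : 'M[F]_N)%R)%N.
Proof.
move=> sy.
set t := tperm y (s^-1%g y).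
set K := kermx (perm_mx s - 1%:M : 'M[F]_N).
set K' := kermx (perm_mx (t * s) - 1%:M : 'M[F]_N).
have KP : K *m perm_mx s = K.
  by apply/eqP; rewrite -subr_eq0 -{2}[K]mulmx1 -mulmxBr mulmx_ker.
have Kinv r x : K r (s^-1%g x) = K r x.
  by rewrite -mul_permE KP.
have Kt : K *m perm_mx t = K.
  apply/matrixP => r x; rewrite mul_permE tpermV.
  case: (tpermP y (s^-1%g y) x) => [->|->|//].
    by rewrite Kinv.
  by rewrite Kinv.
have sKK' : (K <= K')%MS.
  by rewrite sub_kermx perm_mxM mulmxBr mulmxA Kt KP mulmx1 subrr.
pose e : 'rV[F]_N := delta_mx 0 y.
have eK' : (e <= K')%MS.
  rewrite sub_kermx mulmxBr mulmx1 subr_eq0; apply/eqP/matrixP => i j.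
  rewrite mul_permE !mxE invMg permM tpermV.
  congr ((_ && _)%:R); apply/eqP/eqP => [h|->]; last by rewrite tpermR.
  have : tperm y (s^-1%g y) (s^-1%g j) = tperm y (s^-1%g y) (s^-1%g y) by rewrite h tpermR.
  by move/perm_inj/perm_inj.
have eK : ~~ (e <= K)%MS.
  rewrite sub_kermx mulmxBr mulmx1 subr_eq0; apply/eqP => /matrixP /(_ 0 (s y)).
  rewrite mul_permE !mxE permK !eqxx /=.
  move: sy; case: eqP => // _ _ /eqP; by rewrite oner_eq0.
have lt : (\rank K < \rank K')%N.
  have := mxrank_leqif_sup sKK'; case => le eqb.
  rewrite ltn_neqAle le andbT eqb; apply: contra eK => K'K.
  exact: submx_trans eK' K'K.
move: lt; rewrite /K /K' !mxrank_ker.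
have := rank_leq_col (perm_mx s - 1%:M : 'M[F]_N).
have := rank_leq_col (perm_mx (t * s) - 1%:M : 'M[F]_N).
lia.
Qed.

End PermMx.

Lemma abs_len_uniq (A : Type) (mul : A -> A -> A) (one : A) (T : A -> Prop) x a b :
  is_abs_len mul one T x a -> is_abs_len mul one T x b -> a = b.
Proof.
case=> fa ha [fb hb]; apply/eqP; rewrite eqn_leq ha // hb //.
Qed.

Section G.
Variables (d n : nat) (ks : seq 'I_n) (ts : seq int).
Hypothesis d_gt0 : (0 < d)%N.
Hypothesis uks : uniq ks.
Local Notation k := (size ks).

Local Notation z := (zeta d).

Lemma z_neq0 : z != 0.
Proof. by rewrite /zeta expf_eq0 /= rootC_eq0 // oppr_eq0 oner_eq0. Qed.

Lemma z_d : z ^+ d = 1.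
Proof. by rewrite /zeta exprAC rootCK // sqrrN expr1n. Qed.

Lemma zint_d (t : int) : (z ^ t) ^+ d = 1.
Proof.
have -> : (z ^ t) ^+ d = (z ^ t) ^ (Posz d) by [].
rewrite exprzAC.
have -> : z ^ (Posz d) = z ^+ d by [].
by rewrite z_d exp1rz.
Qed.

Definition tc (j : 'I_n) : int := nth 0%R ts (index j ks).
Definition Dv (j : 'I_n) : algC := z ^ tc j.
Definition Dw (j : 'I_n) : algC := z ^ (- tc j).

Lemma DvDw j : Dv j * Dw j = 1.
Proof. by rewrite /Dv /Dw -expfzDr ?z_neq0 // subrr expr0z. Qed.

Lemma DwDv j : Dw j * Dv j = 1.
Proof. by rewrite mulrC DvDw. Qed.

Definition Dm : 'M[algC]_n := diag_mx (\row_j Dv j).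
Definition Dm' : 'M[algC]_n := diag_mx (\row_j Dw j).

Lemma DD' : Dm *m Dm' = 1%:M.
Proof.
rewrite /Dm /Dm' mulmx_diag -diag_const_mx; congr diag_mx.
by apply/matrixP => i j; rewrite !mxE DvDw.
Qed.

Lemma D'D : Dm' *m Dm = 1%:M.
Proof. exact: mulmx1C DD'. Qed.

Definition g (p : 'S_k) : 'M[algC]_n := Dm *m perm_mx (liftp uks p) *m Dm'.

Lemma gE p a b : g p a b = Dv a * (liftp uks p a == b)%:R * Dw b.
Proof. by rewrite /g mul_mx_diag mul_diag_mx !mxE. Qed.

Lemma gM p q : g (p * q) = g p *m g q.
Proof.
rewrite /g liftpM perm_mxM !mulmxA; congr (_ *m _).
by rewrite -(mulmxA _ Dm' Dm) D'D mulmx1.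
Qed.

Lemma g1 : g 1 = 1%:M.
Proof. by rewrite /g liftp1 perm_mx1 mulmx1 DD'. Qed.

Lemma gV p : g p *m g p^-1 = 1%:M.
Proof. by rewrite -gM mulgV g1. Qed.

Lemma g_unit p : g p \in unitmx.
Proof. by have [] := mulmx1_unit (gV p). Qed.

Lemma ginv p : invmx (g p) = g p^-1.
Proof. exact: invmx_eq (gV p). Qed.

Lemma rank_g p : \rank (g p - 1%:M)%R = \rank (perm_mx (liftp uks p) - 1%:M : 'M[algC]_n)%R.
Proof.
have -> : g p - 1%:M = Dm *m (perm_mx (liftp uks p) - 1%:M) *m Dm'.
  by rewrite mulmxBr mulmxBl mulmx1 DD'.
exact: rank_conj DD'.
Qed.

Lemma g_in p : in_Gddn d (g p).
Proof.
exists (liftp uks p)^-1%g; split.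
- move=> i j; rewrite gE; split.
    case: (liftp uks p i =P j) => [<-|]; first by rewrite permK.
    by move=> _ /=; rewrite mulr0 mul0r eqxx.
  move=> ->; rewrite permKV eqxx mulr1.
  by rewrite mulf_neq0 // /Dv /Dw expfz_neq0 // z_neq0.
- by move=> j; rewrite gE permKV eqxx mulr1 exprMn !zint_d mulr1.
- rewrite (eq_bigr (fun j => Dv ((liftp uks p)^-1%g j) * Dw j)); last first.
    by move=> j _; rewrite gE permKV eqxx mulr1.
  rewrite big_split /=.
  have -> : \prod_(j < n) Dv ((liftp uks p)^-1%g j) = \prod_(j < n) Dv j.
    by rewrite [RHS](reindex_inj (@perm_inj _ (liftp uks p)^-1%g)).
  rewrite -big_split /=; apply: big1 => j _; exact: DvDw.
Qed.

Definition rr (p : 'S_k) := \rank (g p - 1%:M)%R.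

Lemma g_tperm (i j : 'I_k) : i != j -> reflG d (g (tperm i j)).
Proof.
move=> ij; split; first exact: g_in.
rewrite rank_g liftp_tperm rank_tperm //.
by apply: contra ij => /eqP /kk_inj ->.
Qed.

Definition factG (M : 'M[algC]_n) m := factor_len (@mulmx algC n n n) 1%:M (@reflG d n) M m.
Definition factS (p : 'S_k) m := factor_len (fun a b : 'S_k => (a * b)%g) 1%g (@transpositionS k) p m.

Lemma factG_rank M m : factG M m -> (\rank (M - 1%:M)%R <= m)%N.
Proof.
case=> s [<- [hT <-]]; elim: s hT => [|x s IH] hT /=.
  by rewrite subrr mxrank0.
apply: leq_trans (rank_prod_sub1 _ _) _.
have [_ ->] := hT 0%N isT.
by rewrite add1n ltnS; apply: IH => i hi; apply: (hT i.+1).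
Qed.

Lemma foldr_g (s : seq 'S_k) :
  foldr (@mulmx algC n n n) 1%:M (map g s) = g (foldr (fun a b => (a * b)%g) 1%g s).
Proof.
elim: s => [|x s IH] /=; first by rewrite g1.
by rewrite IH gM.
Qed.

Lemma factS_map p m : factS p m -> factG (g p) m.
Proof.
case=> s [<- [hT <-]]; exists (map g s); split; first by rewrite size_map.
split; last exact: foldr_g.
move=> i; rewrite size_map => hi; rewrite (nth_map 1%g) //.
have [a [b [ab ->]]] := hT i hi.
exact: g_tperm.
Qed.

Lemma factS_ge p m : factS p m -> (rr p <= m)%N.
Proof. by move/factS_map/factG_rank. Qed.

Lemma rr1 : rr 1 = 0%N.
Proof. by rewrite /rr g1 subrr mxrank0. Qed.

Lemma factS_rr p : factS p (rr p).
Proof.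
move: {2}(rr p).+1 (ltnSn (rr p)) => N; elim: N p => [//|N IH] p.
case: (boolP (p == 1%g)) => [/eqP -> _|np].
  rewrite rr1; exists [::]; split => //; split => //.
have [m pm] : exists m, p m != m.
  apply/existsP; apply: contraR np; rewrite negb_exists => /forallP h.
  apply/eqP/permP => x; rewrite perm1; exact/eqP/negPn/h.
pose t := tperm m (p^-1%g m).
pose p' := (t * p)%g.
have lt : (rr p' < rr p)%N.
  rewrite /rr !rank_g /p' liftpM liftp_tperm.
  have -> : kk (p^-1%g m) = ((liftp uks p)^-1%g (kk m)).
    by rewrite -liftpV liftp_kk.
  apply: rank_step; rewrite liftp_kk.
  by apply: contra pm => /eqP /kk_inj ->.
move=> hN.
have [s [hs [hT hf]]] := IH p' (leq_trans lt (ltnSE hN)).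
have tT : transpositionS t.
  exists m, (p^-1%g m); split => //.
  by apply: contra pm => /eqP e; rewrite {1}e permKV.
have fp : factS p (rr p').+1.
  exists (t :: s); split; first by rewrite /= hs.
  split.
    by case=> [|i] /=; [move=> _; exact: tT | rewrite ltnS; exact: hT].
  by rewrite /= hf /p' mulgA tperm2 mul1g.
have := factS_ge fp.
by move=> h; have -> : rr p = (rr p').+1 by apply/eqP; rewrite eqn_leq h lt.
Qed.

Lemma lenS p : is_abs_len (fun a b : 'S_k => (a * b)%g) 1%g (@transpositionS k) p (rr p).
Proof. split; [exact: factS_rr | move=> m'; exact: factS_ge]. Qed.

Lemma lenG p : is_abs_len (@mulmx algC n n n) 1%:M (@reflG d n) (g p) (rr p).
Proof. split; [exact/factS_map/factS_rr | move=> m'; exact: factG_rank]. Qed.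

Lemma rr_inv p : rr p^-1 = rr p.
Proof. by rewrite /rr -ginv rank_inv_sub1 // g_unit. Qed.

Lemma rr_conj p q : rr (q * p * q^-1) = rr p.
Proof.
rewrite /rr !gM.
have -> : g q *m g p *m g q^-1 - 1%:M = g q *m (g p - 1%:M) *m g q^-1.
  by rewrite mulmxBr mulmxBl mulmx1 gV.
exact: rank_conj (gV _).
Qed.

Lemma leS_iff x y : leS x y <-> rr y = (rr x + rr (x^-1 * y))%N.
Proof.
split.
  case=> a [b [c [ha hb hc e]]].
  by rewrite (abs_len_uniq (lenS y) ha) (abs_len_uniq (lenS x) hb)
             (abs_len_uniq (lenS _) hc) e.
move=> e; exists (rr y), (rr x), (rr (x^-1 * y)); split => //;
  exact: lenS.
Qed.

Lemma leG_iff x y : leG d (g x) (g y) <-> rr y = (rr x + rr (x^-1 * y))%N.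
Proof.
have E : invmx (g x) *m g y = g (x^-1 * y) by rewrite ginv gM.
split.
  case=> a [b [c [ha hb hc e]]].
  rewrite E in hc.
  by rewrite (abs_len_uniq (lenG y) ha) (abs_len_uniq (lenG x) hb)
             (abs_len_uniq (lenG _) hc) e.
move=> e; exists (rr y), (rr x), (rr (x^-1 * y)); split => //;
  [exact: lenG | exact: lenG | rewrite E; exact: lenG].
Qed.

Definition phi (x : 'S_k) := g x^-1.

Lemma le_phi x y : leG d (phi x) (phi y) <-> leS x y.
Proof.
rewrite /phi leG_iff leS_iff !rr_inv invgK.
have -> : rr (x * y^-1) = rr (x^-1 * y).
  by rewrite -rr_inv invMg invgK -[RHS](rr_conj _ x) !mulgA mulgV mul1g.
by [].
Qed.

Lemma w_phi : sim_cycle d ks ts = phi (long_cycle k).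
Proof.
apply/matrixP => i j; rewrite /phi gE !mxE.
have Hc : forall x, (liftp uks (long_cycle k)^-1 x == j) = (x == liftp uks (long_cycle k) j).
  move=> x; rewrite liftpV; apply/eqP/eqP => [<-|->]; by rewrite ?permKV ?permK.
rewrite Hc.
case: (boolP (j \in ks)) => [jin|jn]; last first.
  rewrite liftp_out //.
  case: (i =P j) => [->|_] /=; first by rewrite mulr1 DvDw.
  by rewrite mulr0 mul0r.
case: (kk_onto jin) => m em.
have Hm : index j ks = m by rewrite em index_kk.
rewrite /= Hm em liftp_kk /long_cycle permE.
have -> : nth (kk m) ks ((m.+1 %% k)%N) = kk (ordS m).
  by rewrite [RHS]/kk (tnth_nth (kk m)).
case: eqP => [->|_]; last by rewrite mulr0 mul0r.
rewrite mulr1 /Dv /Dw /tc !(index_kk uks) expfzDr ?z_neq0 //.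
Qed.

Lemma in_Gddn_unit (u : 'M[algC]_n) : in_Gddn d u -> u \in unitmx.
Proof.
case=> s [hs _ _].
pose N : 'M[algC]_n := \matrix_(j, i) (u i j)^-1.
suff /mulmx1_unit [] : u *m N = 1%:M by [].
apply/matrixP => i l; rewrite !mxE (bigD1 (s^-1%g i)) //= big1; last first.
  move=> j nj; have : u i j == 0.
    apply/negPn; apply/negP => /hs e; move: nj; by rewrite e permK eqxx.
  by move/eqP ->; rewrite mul0r.
rewrite addr0 mxE.
have ui : u i (s^-1%g i) != 0 by apply/hs; rewrite permKV.
case: (i =P l) => [<-|il] /=; first by rewrite mulfV.
have : u l (s^-1%g i) == 0.
  apply/negPn; apply/negP => /hs e; apply: il; by rewrite e permKV.
by move/eqP ->; rewrite invr0 mulr0.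
Qed.

Definition r0 : 'rV[algC]_n := \row_j (if j \in ks then Dw j else 0).

Lemma fix_e p j : j \notin ks -> (delta_mx 0 j : 'rV[algC]_n) *m g p = delta_mx 0 j.
Proof.
move=> jn; apply/matrixP => a b; rewrite !mxE (bigD1 j) //= big1; last first.
  by move=> i ni; rewrite !mxE (negbTE ni) andbF mul0r.
rewrite addr0 gE !mxE eqxx andbT liftp_out //.
case: (a == 0) => /=; last by rewrite !mul0r.
rewrite mul1r eq_sym; case: (b =P j) => [e|ne] /=.
  by rewrite e mulr1 DvDw.
by rewrite mulr0 mul0r.
Qed.

Lemma fix_r0 p : r0 *m g p = r0.
Proof.
apply/matrixP => a b; rewrite !mxE (bigD1 ((liftp uks p)^-1%g b)) //= big1; last first.
  move=> i ni; rewrite gE; case: (liftp uks p i =P b) => [e|_] /=.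
    by move: ni; rewrite -e permK eqxx.
  by rewrite mulr0 mul0r mulr0.
rewrite addr0 gE permKV eqxx mulr1 !mxE.
have Hin : ((liftp uks p)^-1%g b \in ks) = (b \in ks).
  apply: (@liftp_cases _ ks (fun b => ((liftp uks p)^-1%g b \in ks) = (b \in ks))).
    by move=> m; rewrite -liftpV liftp_kk !kk_in.
  by move=> x xn; rewrite -liftpV liftp_out // (negbTE xn).
rewrite Hin; case: (b \in ks); last by rewrite !mul0r.
by rewrite mulrA DwDv mul1r.
Qed.

Lemma fixed_is_g (u : 'M[algC]_n) : in_Gddn d u ->
  (forall j, j \notin ks -> (delta_mx 0 j : 'rV[algC]_n) *m u = delta_mx 0 j) ->
  r0 *m u = r0 -> exists q, u = g q.
Proof.
case=> s [hs _ _] he hr.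
have sfix j : j \notin ks -> s j = j.
  move=> jn; have := congr1 (fun M : 'rV[algC]_n => M 0 j) (he j jn).
  rewrite !mxE (bigD1 j) //= big1; last first.
    by move=> i ni; rewrite !mxE (negbTE ni) andbF mul0r.
  rewrite addr0 !mxE !eqxx /= mul1r => ujj.
  apply/esym; apply/hs; rewrite ujj oner_eq0 //.
have sin x : (s x \in ks) = (x \in ks).
  case: (boolP (x \in ks)) => xin; last by apply/negbTE; rewrite sfix.
  apply/negPn/negP => sxn; have := sfix _ sxn; move/perm_inj => e.
  by move: sxn; rewrite e xin.
have sVin x : (s^-1%g x \in ks) = (x \in ks).
  by rewrite -{2}(permKV s x) sin.
have qlt (m : 'I_k) : (index (s^-1%g (kk m)) ks < k)%N.
  by rewrite index_mem sVin kk_in.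
pose qf (m : 'I_k) : 'I_k := Ordinal (qlt m).
have kkq m : kk (qf m) = s^-1%g (kk m).
  by apply/eqP; rewrite /kk (tnth_nth (kk m)) /= nth_index // sVin kk_in.
have qinj : injective qf.
  move=> a b e; have : kk (qf a) = kk (qf b) by rewrite e.
  by rewrite !kkq => /perm_inj; apply: kk_inj.
pose q := perm qinj.
have lq : liftp uks q = s^-1%g.
  apply/permP; apply: (@liftp_cases _ ks) => [m|j jn].
    by rewrite liftp_kk permE kkq.
  rewrite liftp_out //; apply: (@perm_inj _ s); by rewrite permKV sfix.
exists q; apply/matrixP => a b; rewrite gE lq.
case: (s^-1%g a =P b) => [ea|na] /=; last first.
  rewrite mulr0 mul0r; apply/eqP; apply/negPn/negP => /hs e.
  by apply: na; rewrite e permK.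
have -> : a = s b by rewrite -ea permKV.
rewrite mulr1.
case: (boolP (b \in ks)) => bin; last first.
  rewrite sfix //; have := congr1 (fun M : 'rV[algC]_n => M 0 b) (he b bin).
  rewrite !mxE (bigD1 b) //= big1; last first.
    by move=> i ni; rewrite !mxE (negbTE ni) andbF mul0r.
  by rewrite addr0 !mxE !eqxx /= mul1r DvDw.
have := congr1 (fun M : 'rV[algC]_n => M 0 b) hr.
rewrite !mxE (bigD1 (s b)) //= big1; last first.
  move=> i ni; have : u i b == 0.
    apply/negPn; apply/negP => /hs e; by move: ni; rewrite e eqxx.
  by move/eqP ->; rewrite mulr0.
rewrite addr0 !mxE sin bin => e.
have : Dv (s b) * (Dw (s b) * u (s b) b) = Dv (s b) * Dw b by rewrite e.
by rewrite mulrA DvDw mul1r.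
Qed.
Lemma arith_aux (N A B W S C : nat) : (S + C = (N - A) + (N - B))%N -> (S <= N)%N ->
  (A + B = W)%N -> (A <= N)%N -> (B <= N)%N -> (C <= N - W)%N -> C = (N - W)%N.
Proof. lia. Qed.

Lemma kerfix m (C : 'M[algC]_(m, n)) (A : 'M[algC]_n) :
  (C <= kermx (A - 1%:M))%MS = (C *m A == C).
Proof. by rewrite sub_kermx mulmxBr mulmx1 subr_eq0. Qed.

Lemma g_inj : injective g.
Proof.
move=> p q e; apply: (@liftp_inj _ _ uks); apply/permP => i.
have := congr1 (fun M : 'M[algC]_n => M i (liftp uks p i)) e.
rewrite !gE eqxx mulr1.
case: (liftp uks q i =P liftp uks p i) => // _ /= /eqP.
by rewrite mulr0 mul0r mulf_eq0 /Dv /Dw !expfz_eq0 (negbTE z_neq0) !andbF.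
Qed.

Lemma phi_inj : injective phi.
Proof. by move=> a b /g_inj /invg_inj. Qed.

Lemma phi1 : phi 1 = 1%:M.
Proof. by rewrite /phi invg1 g1. Qed.

Lemma interval_fix (u : 'M[algC]_n) :
  in_Gddn d u -> leG d u (phi (long_cycle k)) -> exists x, u = phi x.
Proof.
move=> uG [a [b [c [ha hb hc e]]]].
set w := phi (long_cycle k) in ha hc *.
have uU := in_Gddn_unit uG.
set X := invmx u *m w in hc.
have wuX : w = u *m X by rewrite /X mulKVmx.
have aw : a = \rank (w - 1%:M : 'M[algC]_n)%R.
  by rewrite (abs_len_uniq ha (lenG _)).
have hub := factG_rank hb.1.
have hxc := factG_rank hc.1.
have hsub := rank_prod_sub1 u X; rewrite -wuX in hsub.
have E : (\rank (u - 1%:M : 'M[algC]_n)%R + \rank (X - 1%:M : 'M[algC]_n)%R = \rank (w - 1%:M : 'M[algC]_n)%R)%N.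
  by apply/eqP; rewrite eqn_leq hsub andbT -aw e leq_add.
set Lu := kermx (u - 1%:M); set Lx := kermx (X - 1%:M); set Lw := kermx (w - 1%:M).
have capLw : (Lu :&: Lx <= Lw)%MS.
  rewrite kerfix.
  have h1 : ((Lu :&: Lx)%MS *m u == (Lu :&: Lx)%MS) by rewrite -kerfix capmxSl.
  have h2 : ((Lu :&: Lx)%MS *m X == (Lu :&: Lx)%MS) by rewrite -kerfix capmxSr.
  by rewrite wuX mulmxA (eqP h1).
have rk := mxrank_sum_cap Lu Lx.
have := rank_leq_col (Lu + Lx)%MS.
have := mxrank_leqif_sup capLw; case=> le eqb.
rewrite /Lu /Lx /Lw !mxrank_ker in rk le eqb.
move=> hle.
have := rank_leq_col (u - 1%:M : 'M[algC]_n)%R.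
have := rank_leq_col (X - 1%:M : 'M[algC]_n)%R.
move=> h3 h4.
rewrite /Lu /Lx in hle.
have eqr := arith_aux rk hle E h4 h3 le.
have LwC : (Lw <= Lu :&: Lx)%MS by rewrite -eqb eqr.
have LwU : (Lw <= Lu)%MS := submx_trans LwC (capmxSl _ _).
have fixu (r : 'rV[algC]_n) : r *m w = r -> r *m u = r.
  move=> rw; apply/eqP; rewrite -kerfix.
  apply: submx_trans LwU; by rewrite kerfix rw.
have [q ->] := fixed_is_g uG (fun j jn => fixu _ (fix_e _ jn)) (fixu _ (fix_r0 _)).
by exists q^-1%g; rewrite /phi invgK.
Qed.

Lemma main_iso : poset_iso (intervalG d (sim_cycle d ks ts)) (@leG d n)
  (@NC_interval k) (@leS k).
Proof.
rewrite w_phi.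
pose f (u : 'M[algC]_n) : 'S_k := odflt 1%g [pick x | u == phi x].
have fP u : (exists x, u = phi x) -> u = phi (f u).
  case=> x ex; rewrite /f; case: pickP => [y /eqP //|/(_ x)].
  by rewrite ex eqxx.
have fphi x : f (phi x) = x.
  by apply: phi_inj; rewrite -fP //; exists x.
exists f, phi; split.
- move=> u [uG [l1 l2]]; have [x ex] := interval_fix uG l2.
  rewrite ex fphi; split; apply/le_phi; first by rewrite phi1 -ex.
  by rewrite -ex.
- move=> x [n1 n2]; split; first exact: g_in.
  by split; [rewrite -phi1 | ]; apply/le_phi.
- move=> u [uG [l1 l2]]; apply/esym/fP; exact: interval_fix uG l2.
- by move=> x _; exact: fphi.
- move=> u v [uG [_ lu]] [vG [_ lv]].
  have [x ->] := interval_fix uG lu; have [y ->] := interval_fix vG lv.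
  by rewrite !fphi le_phi.
Qed.

End G.

Local Close Scope ring_scope.

Theorem lemma3p2 (d n : nat) (w : 'M[algC]_n) (ks : seq 'I_n) (ts : seq int) :
  (2 <= d)%N -> (2 <= n)%N ->
  parabolic_coxeterG d w ->
  uniq ks -> size ts = size ks ->
  w = sim_cycle d ks ts ->
  poset_iso (intervalG d w) (@leG d n)
            (@NC_interval (size ks)) (@leS (size ks)).
Proof.
move=> d2 _ _ uks _ ->.
have d0 : (0 < d)%N by apply: leq_trans d2.
exact: (main_iso ts d0 uks).
Qed.
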